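(* Let $p$ be a state. The interior of $p^{TP}=\{Tp:T\in TP(d)\}$, taken relative to the affine hyperplane $\{x\in\mathbb{R}^d:\sum_i x_i=1\}$, consists exactly of the states $r$ such that every elbow $(x,y)$ of $\beta(r)$ lies strictly below $\beta(p)$, i.e. $y<\beta(p)(x)$.
   Context: Fix $d\ge 2$, $\beta\in(0,\infty)$ and pairwise distinct reals $E_0=0,E_1,\dots,E_{d-1}$. Put $q_{m,n}=e^{-\beta(E_m-E_n)}$, $Z=\sum_j q_{j,0}$, $g_i=q_{i,0}/Z$. A state is a probability vector in $\mathbb{R}^d$. $TP(d)$ is the set of $d\times d$ real matrices with non-negative entries, columns summing to $1$, and $Tg=g$. For a state $p$ choose a permutation $\pi$ of $\{0,\dots,d-1\}$ with $p_{\pi(0)}/g_{\pi(0)}\ge\dots\ge p_{\pi(d-1)}/g_{\pi(d-1)}$; let $x_k=\sum_{i\le k}g_{\pi(i)}$, $y_k=\sum_{i\le k}p_{\pi(i)}$. The thermomajorization curve $\beta(p)$ is the graph of the concave piecewise-linear function $\beta(p)(\cdot)$ on $[0,1]$ through $(0,0),(x_0,y_0),\dots,(x_{d-1},y_{d-1})=(1,1)$. The elbows of $\beta(p)$ are the points $(x_k,y_k)$ for $k=0,\dots,d-2$. *)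

(* Defs.v *)
From HB Require Import structures.
From mathcomp Require Import all_boot all_order all_algebra all_fingroup.
From mathcomp Require Import all_classical all_reals all_analysis.
Set Implicit Arguments. Unset Strict Implicit. Unset Printing Implicit Defensive.
Import Order.TTheory GRing.Theory Num.Theory.
Local Open Scope ring_scope.

Section TM.
Variables (R : realType) (d : nat).

Definition qfac (beta : R) (E : 'I_d -> R) (m n : 'I_d) : R :=
  expR (- beta * (E m - E n)).

(* Gibbs state g_i = q_{i,0}/Z, Z = sum_j q_{j,0}; the index 0 is [i0]. *)
Definition gibbs (beta : R) (E : 'I_d -> R) (i0 : 'I_d) (i : 'I_d) : R :=
  qfac beta E i i0 / \sum_(j < d) qfac beta E j i0.

Definition isState (p : 'cV[R]_d) : Prop :=
  (forall i, 0 <= p i 0) /\ \sum_(i < d) p i 0 = 1.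

Definition gibbsV beta E i0 : 'cV[R]_d := \col_i gibbs beta E i0 i.

Definition isTP beta E i0 (T : 'M[R]_d) : Prop :=
  (forall i j, 0 <= T i j) /\ (forall j, \sum_(i < d) T i j = 1) /\
  T *m gibbsV beta E i0 = gibbsV beta E i0.

Definition TPorbit beta E i0 (p : 'cV[R]_d) : set 'cV[R]_d :=
  [set r | exists T, isTP beta E i0 T /\ r = T *m p].

Definition rel_interior (S : set 'cV[R]_d) (r : 'cV[R]_d) : Prop :=
  \sum_(i < d) r i 0 = 1 /\
  exists2 eps : R, 0 < eps & forall x : 'cV[R]_d, \sum_(i < d) x i 0 = 1 ->
    (forall i, `|x i 0 - r i 0| < eps) -> S x.

Definition sorting beta E i0 (p : 'cV[R]_d) (pi : {perm 'I_d}) : Prop :=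
  forall i j : 'I_d, (i <= j)%N ->
    p (pi j) 0 / gibbs beta E i0 (pi j) <= p (pi i) 0 / gibbs beta E i0 (pi i).

Definition xcum beta E i0 (pi : {perm 'I_d}) (k : nat) : R :=
  \sum_(i < d | (i <= k)%N) gibbs beta E i0 (pi i).
Definition ycum (p : 'cV[R]_d) (pi : {perm 'I_d}) (k : nat) : R :=
  \sum_(i < d | (i <= k)%N) p (pi i) 0.
(* x_{k-1}, with x_{-1} = 0 *)
Definition xprev beta E i0 (pi : {perm 'I_d}) (k : nat) : R :=
  \sum_(i < d | (i < k)%N) gibbs beta E i0 (pi i).

Definition clamp01 (t : R) : R := Num.min 1 (Num.max 0 t).

(* beta(p)(x) for x in [0,1]: the piecewise-linear interpolation through
   (0,0),(x_0,y_0),...,(x_{d-1},y_{d-1}).  On [x_{k-1},x_k] it equals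
   y_{k-1} + p_{pi k} (x - x_{k-1}) / g_{pi k}, the slope being
   (y_k-y_{k-1})/(x_k-x_{k-1}). *)
Definition tmcurve beta E i0 (p : 'cV[R]_d) (pi : {perm 'I_d}) (x : R) : R :=
  \sum_(k < d) p (pi k) 0 *
     clamp01 ((x - xprev beta E i0 pi k) / gibbs beta E i0 (pi k)).

End TM.

(* Main.v *)
Require Import Defs.
From HB Require Import structures.
From mathcomp Require Import all_boot all_order all_algebra all_fingroup.
From mathcomp Require Import all_classical all_reals all_analysis.
From mathcomp Require Import ring lra zify.
Import Order.TTheory GRing.Theory Num.Theory.
Local Open Scope ring_scope.

Module Farkas.

Section Farkas.
Variables (R : realFieldType) (I : finType).
Fact dotv_key : unit. Proof. exact: tt. Qed.
Definition dotv (c v : I -> R) := locked_with dotv_key (\sum_i c i * v i).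
Lemma dotvE c v : dotv c v = \sum_i c i * v i.
Proof. by rewrite /dotv unlock. Qed.

Lemma dotv_linr c (u v : I -> R) k1 k2 :
  dotv c (fun i => k1 * u i - k2 * v i) = k1 * dotv c u - k2 * dotv c v.
Proof. rewrite !dotvE !mulr_sumr -sumrB; apply: eq_bigr => i _; ring. Qed.

Lemma dotv_linl (c1 c2 v : I -> R) k :
  dotv (fun i => c1 i - k * c2 i) v = dotv c1 v - k * dotv c2 v.
Proof. rewrite !dotvE !mulr_sumr -sumrB; apply: eq_bigr => i _; ring. Qed.

Lemma ord_S_cases n (j : 'I_n.+1) :
  (exists j' : 'I_n, j = widen_ord (leqnSn n) j') \/ j = ord_max.
Proof.
case: j => m hm; case: (ltnP m n) => h.
- by left; exists (Ordinal h); apply: val_inj.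
- by right; apply: val_inj => /=; apply/eqP; rewrite eqn_leq h -ltnS hm.
Qed.

Arguments ord_S_cases {n}.

Lemma farkas n (a : 'I_n -> I -> R) (b : I -> R) :
  (exists mu : 'I_n -> R, (forall j, 0 <= mu j) /\
      forall i, b i = \sum_j mu j * a j i) \/
  (exists c : I -> R, (forall j, 0 <= dotv c (a j)) /\ dotv c b < 0).
Proof.
elim: n a b => [|n IH] a b.
  case: (boolP [forall i, b i == 0]) => [/forallP H|/forallPn [i0 Hi0]].
    left; exists (fun _ => 0); split=> // i; rewrite big_ord0; exact/eqP/H.
  right; exists (fun i => - b i); split => [[j]|]//.
  rewrite dotvE.
  have : 0 < \sum_i b i * b i.
    rewrite (bigD1 i0) //=.
    have h1 : 0 < b i0 * b i0.
      by rewrite -expr2 exprn_even_gt0 //.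
    have h2 : 0 <= \sum_(i | i != i0) b i * b i.
      by apply: sumr_ge0 => i _; rewrite -expr2 sqr_ge0.
    lra.
  have -> : \sum_i - b i * b i = - \sum_i b i * b i.
    by rewrite -sumrN; apply: eq_bigr => i _; ring.
  lra.
set a' := fun j : 'I_n => a (widen_ord (leqnSn n) j).
set an := a ord_max.
case: (IH a' b) => [[mu [mu0 Hb]]|[c [Hc Hcb]]].
  left; exists (fun j : 'I_n.+1 => if @insub _ (fun k => k < n)%N 'I_n (val j) is Some j' then mu j' else 0).
  split.
    by move=> j; case: insub => // j'; apply: mu0.
  move=> i; rewrite big_ord_recr /= insubF ?ltnn // mul0r addr0 Hb.
  apply: eq_bigr => j _.
  case: insubP => [j' _ hj|]; last by rewrite ltn_ord.
  by rewrite /a' (_ : j' = j) //; apply: val_inj.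
case: (lerP 0 (dotv c an)) => Han.
  right; exists c; split => // j.
  have [[j' hj]|hj] := ord_S_cases j; rewrite hj //; exact: (Hc j').
set al := dotv c an.
have Hal : al < 0 by [].
have alne : al != 0 by rewrite lt_eqF.
pose a'' := fun (j : 'I_n) i => dotv c (a' j) * an i - al * a' j i.
pose b'' := fun i => dotv c b * an i - al * b i.
case: (IH a'' b'') => [[mu [mu0 Hb]]|[c' [Hc' Hcb']]].
  pose S := \sum_j mu j * dotv c (a' j).
  have S0 : 0 <= S.
    by apply: sumr_ge0 => j _; apply: mulr_ge0 => //; apply: Hc.
  left; exists (fun j : 'I_n.+1 => if @insub _ (fun k => k < n)%N 'I_n (val j) is Some j' then mu j'
                                    else (dotv c b - S) / al).
  split.
    move=> j; case: insub => [j'|]; first by apply: mu0.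
    have h : 0 <= (- (dotv c b - S)) / (- al).
      by apply: divr_ge0; lra.
    by rewrite invrN mulrNN in h.
  move=> i; rewrite big_ord_recr /= insubF ?ltnn //.
  have -> : \sum_(j < n) (if @insub _ (fun k => k < n)%N 'I_n (val (widen_ord (leqnSn n) j)) is Some j' then mu j'
              else (dotv c b - S) / al) *
              a (widen_ord (leqnSn n) j) i = \sum_j mu j * a' j i.
    apply: eq_bigr => j _.
    case: insubP => [j' _ hj|]; last by rewrite /= ltn_ord.
    by rewrite /a' (_ : j' = j) //; apply: val_inj.
  have E := Hb i.
  have E2 : \sum_j mu j * a'' j i = S * an i - al * \sum_j mu j * a' j i.
    rewrite /S mulr_sumr mulr_suml -sumrB; apply: eq_bigr => j _.
    rewrite /a''; ring.
  rewrite E2 /b'' in E.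
  set X := \sum_j mu j * a' j i in E *.
  rewrite -/an.
  have -> : b i = (al * b i) / al by field.
  have -> : al * b i = dotv c b * an i - S * an i + al * X.
    by move: E; generalize (dotv c b * an i) (S * an i) (al * X) (al * b i) => A B C D; lra.
  by field.
right; exists (fun i => c' i - (dotv c' an / al) * c i).
have key : forall v, dotv (fun i => c' i - (dotv c' an / al) * c i) v =
    - (dotv c v * dotv c' an - al * dotv c' v) / al.
  by move=> v; rewrite dotv_linl; field.
split.
  move=> j; rewrite key.
  case: (ord_S_cases j) => [[j' hj]|hj]; rewrite hj.
    have := Hc' j'; rewrite /a'' dotv_linr => h.
    have h2 : 0 <= (dotv c (a' j') * dotv c' an - al * dotv c' (a' j')) / (- al).
      by apply: divr_ge0; lra.
    by rewrite invrN mulrN -mulNr in h2.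
  rewrite -/an -/al.
  have -> : al * dotv c' an - al * dotv c' an = 0 by ring.
  by rewrite oppr0 mul0r.
rewrite key.
have := Hcb'; rewrite /b'' dotv_linr => h.
have h2 : 0 < (- (dotv c b * dotv c' an - al * dotv c' b)) / (- al).
  by apply: divr_gt0; lra.
rewrite invrN mulrNN in h2.
have h3 : - (dotv c b * dotv c' an - al * dotv c' b) / al = - ((dotv c b * dotv c' an - al * dotv c' b) / al) by rewrite mulNr.
rewrite h3.
have h4 : 0 < (dotv c b * dotv c' an - al * dotv c' b) / al.
  have h5 : 0 < (- (dotv c b * dotv c' an - al * dotv c' b)) / (- al) by apply: divr_gt0; lra.
  by rewrite invrN mulrNN in h5.
lra.
Qed.
End Farkas.

End Farkas.
Import Farkas.

Module Thermo.

Section Clamp.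
Variable R : realType.
Lemma clamp_ge1 (t : R) : 1 <= t -> clamp01 t = 1.
Proof. by move=> h; rewrite /clamp01 !minEle !maxEle; case: (lerP 0 t) => ?; case: (lerP 1 t) => ?; case: (lerP (1:R) 0) => ?; lra. Qed.
Lemma clamp_le0 (t : R) : t <= 0 -> clamp01 t = 0.
Proof. by move=> h; rewrite /clamp01 !minEle !maxEle; case: (lerP 0 t) => ?; case: (lerP 1 t) => ?; case: (lerP (1:R) 0) => ?; lra. Qed.
Lemma clamp_id (t : R) : 0 <= t -> t <= 1 -> clamp01 t = t.
Proof. by move=> h1 h2; rewrite /clamp01 !minEle !maxEle; case: (lerP 0 t) => ?; case: (lerP 1 t) => ?; case: (lerP (1:R) 0) => ?; lra. Qed.
Lemma clamp_ge0 (t : R) : 0 <= clamp01 t.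
Proof. by rewrite /clamp01 !minEle !maxEle; case: (lerP 0 t) => ?; case: (lerP 1 t) => ?; case: (lerP (1:R) 0) => ?; lra. Qed.
Lemma clamp_le1 (t : R) : clamp01 t <= 1.
Proof. by rewrite /clamp01 !minEle !maxEle; case: (lerP 0 t) => ?; case: (lerP 1 t) => ?; case: (lerP (1:R) 0) => ?; lra. Qed.
Lemma clamp_mono (s t : R) : s <= t -> clamp01 s <= clamp01 t.
Proof.
move=> h; rewrite /clamp01 !minEle !maxEle; case: (lerP 0 t) => ?; case: (lerP 0 s) => ?;
 case: (lerP 1 t) => ?; case: (lerP 1 s) => ?; case: (lerP (1:R) 0) => ?; lra.
Qed.
End Clamp.

Lemma natA (k d : nat) : (k < d)%N -> (d - 2 < k)%N -> k.+1 = d.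
Proof. lia. Qed.
Lemma natB (k d : nat) : (k < d)%N -> (0 < k)%N -> (k.-1 <= d - 2)%N.
Proof. rewrite -subn1; lia. Qed.
Lemma natC (k d : nat) : (1 < d)%N -> (d - 2 < k)%N -> (0 < k)%N.
Proof. lia. Qed.

Section Thermo.
Variables (R : realType) (d : nat) (g : 'I_d -> R).
Hypothesis dpos : (0 < d)%N.
Hypothesis gpos : forall i, 0 < g i.
Hypothesis gsum : \sum_i g i = 1.

Definition xp (s : 'I_d -> R) (pi : {perm 'I_d}) (n : nat) : R :=
  \sum_(i < d | (i < n)%N) s (pi i).
Definition Phi (s : 'I_d -> R) (sg : {perm 'I_d}) (t : R) : R :=
  \sum_(k < d) s (sg k) * clamp01 ((t - xp g sg k) / g (sg k)).
Definition srt (s : 'I_d -> R) (sg : {perm 'I_d}) : Prop :=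
  forall i j : 'I_d, (i <= j)%N -> s (sg j) / g (sg j) <= s (sg i) / g (sg i).

Lemma g_ne0 i : g i != 0.
Proof. by rewrite gt_eqF. Qed.

Lemma xp_split s pi (k : 'I_d) : xp s pi k.+1 = xp s pi k + s (pi k).
Proof.
rewrite /xp (bigD1 k) ?ltnSn //= addrC; congr (_ + _); apply: eq_bigl => i /=.
by rewrite ltnS leq_eqVlt -val_eqE /=; case: ltngtP.
Qed.

Lemma xp0 s pi : xp s pi 0 = 0.
Proof. by rewrite /xp big_pred0 // => i; rewrite ltn0. Qed.

Lemma sum_perm (s : 'I_d -> R) (pi : {perm 'I_d}) : \sum_i s (pi i) = \sum_i s i.
Proof. by rewrite [RHS](reindex_inj (@perm_inj _ pi)). Qed.

Lemma xpd s pi : xp s pi d = \sum_i s i.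
Proof.
rewrite /xp -(sum_perm s pi); apply: eq_bigl => i; exact: ltn_ord.
Qed.

Lemma xp_mono s pi m n : (forall i, 0 <= s i) -> (m <= n)%N -> xp s pi m <= xp s pi n.
Proof.
move=> s0 mn; rewrite /xp (big_mkcond (fun i : 'I_d => (i < m)%N))
  (big_mkcond (fun i : 'I_d => (i < n)%N)); apply: ler_sum => i _.
case: ifP => h1; case: ifP => h2; rewrite ?lexx //.
all: try by rewrite (leq_trans h1 mn) in h2.
all: try exact: s0.
Qed.

Lemma g_ge0 i : 0 <= g i. Proof. exact: ltW. Qed.

Lemma xpg_le1 pi n : xp g pi n <= 1.
Proof.
case: (leqP n d) => h.
  by rewrite -gsum -(xpd g pi); apply: xp_mono => //; exact: g_ge0.
rewrite -gsum -(xpd g pi) /xp le_eqVlt; apply/orP; left; apply/eqP/eq_bigl => i.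
by rewrite (ltn_trans (ltn_ord i) h) ltn_ord.
Qed.

Lemma xpg_ge0 pi n : 0 <= xp g pi n.
Proof. by rewrite -(xp0 g pi); apply: xp_mono => //; exact: g_ge0. Qed.

Lemma seg_exists sg t : 0 <= t -> t <= 1 ->
  exists k : 'I_d, xp g sg k <= t /\ t <= xp g sg k + g (sg k).
Proof.
move=> t0 t1.
have claim : forall n, (n <= d)%N ->
   (exists k : 'I_d, xp g sg k <= t /\ t <= xp g sg k + g (sg k)) \/ xp g sg n <= t.
  elim=> [|n IH] hn; first by right; rewrite xp0.
  case: (IH (ltnW hn)) => [|h]; first by left.
  case: (lerP t (xp g sg n + g (sg (Ordinal hn)))) => h2.
    by left; exists (Ordinal hn).
  by right; rewrite (xp_split g sg (Ordinal hn)) /=; apply: ltW.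
case: (claim d (leqnn d)) => // h.
have dd : (d.-1 < d)%N by rewrite prednK.
exists (Ordinal dd) => /=.
have := xp_split g sg (Ordinal dd); rewrite /= prednK // => e.
have := xpd g sg; rewrite gsum => e1.
have := xpg_le1 sg d.-1.
split; lra.
Qed.

Lemma Phi_seg s sg (k : 'I_d) t :
  xp g sg k <= t -> t <= xp g sg k + g (sg k) ->
  Phi s sg t = xp s sg k + s (sg k) * ((t - xp g sg k) / g (sg k)).
Proof.
move=> h1 h2.
have gk := gpos (sg k).
have term : forall j : 'I_d,
   s (sg j) * clamp01 ((t - xp g sg j) / g (sg j)) =
   (if (j < k)%N then s (sg j) else 0) +
   (if j == k then s (sg k) * ((t - xp g sg k) / g (sg k)) else 0).
  move=> j; have gj := gpos (sg j).
  case: (ltngtP (val j) (val k)) => h.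
  - rewrite -val_eqE (ltn_eqF h) addr0 clamp_ge1 ?mulr1 //.
    rewrite ler_pdivlMr // mul1r.
    have := xp_mono g sg j.+1 k g_ge0 h.
    rewrite xp_split; lra.
  - rewrite -val_eqE (gtn_eqF h) addr0 clamp_le0 ?mulr0 //.
    rewrite ler_pdivrMr // mul0r.
    have := xp_mono g sg k.+1 j g_ge0 h.
    rewrite xp_split; lra.
  - have -> : j = k by apply: val_inj.
    rewrite eqxx add0r clamp_id //.
      by rewrite divr_ge0 //; lra.
    by rewrite ler_pdivrMr // mul1r; lra.
rewrite /Phi (eq_bigr _ (fun j _ => term j)) big_split /=.
congr (_ + _); first by rewrite /xp [RHS]big_mkcond.
by rewrite -big_mkcond big_pred1_eq.
Qed.

Lemma Phi_g sg t : 0 <= t -> t <= 1 -> Phi g sg t = t.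
Proof.
move=> t0 t1; have [k [h1 h2]] := seg_exists sg t t0 t1.
rewrite (Phi_seg g sg k t h1 h2); field; exact: g_ne0.
Qed.

Lemma Phi0 s sg : Phi s sg 0 = 0.
Proof.
rewrite /Phi big1 // => k _; rewrite clamp_le0 ?mulr0 //.
rewrite ler_pdivrMr // mul0r; have := xpg_ge0 sg k; lra.
Qed.

Lemma Phi1 s sg : Phi s sg 1 = \sum_i s i.
Proof.
rewrite /Phi -(sum_perm s sg); apply: eq_bigr => k _.
rewrite clamp_ge1 ?mulr1 // ler_pdivlMr // mul1r.
have := xpg_le1 sg k.+1; rewrite xp_split; lra.
Qed.

Lemma L1 s (sg : {perm 'I_d}) (k : nat) mu (w : 'I_d -> R) :
  (forall i : 'I_d, (i < k)%N -> mu * g (sg i) <= s (sg i)) ->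
  (forall i : 'I_d, (k <= i)%N -> s (sg i) <= mu * g (sg i)) ->
  (forall i, 0 <= w i <= 1) ->
  \sum_i s i * w i <= xp s sg k + mu * (\sum_i g i * w i - xp g sg k).
Proof.
move=> hlo hhi hw.
have H1 : \sum_i s i * w i - mu * \sum_i g i * w i =
          \sum_j (s (sg j) - mu * g (sg j)) * w (sg j).
  rewrite -(sum_perm (fun i => s i * w i) sg) -(sum_perm (fun i => g i * w i) sg).
  by rewrite mulr_sumr -sumrB; apply: eq_bigr => j _; ring.
have H2 : xp s sg k - mu * xp g sg k =
          \sum_(j < d | (j < k)%N) (s (sg j) - mu * g (sg j)).
  by rewrite /xp mulr_sumr -sumrB.
have H3 : \sum_j (s (sg j) - mu * g (sg j)) * w (sg j) <=
          \sum_(j < d | (j < k)%N) (s (sg j) - mu * g (sg j)).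
  rewrite [X in _ <= X]big_mkcond; apply: ler_sum => j _.
  have /andP [w0 w1] := hw (sg j).
  case: ifP => h.
    have := hlo j h; nra.
  have := hhi j; rewrite leqNgt h => /(_ isT); nra.
move: H1 H2 H3.
set A := \sum_i s i * w i.
set B := \sum_i g i * w i.
set C := \sum_j (s (sg j) - mu * g (sg j)) * w (sg j).
set D := \sum_(j < d | (j < k)%N) (s (sg j) - mu * g (sg j)).
set G := xp s sg k.
rewrite mulrBr; set E := mu * B; set F := mu * xp g sg k.
clearbody A B C D E F G; lra.
Qed.

Lemma L1' s sg (k : 'I_d) (w : 'I_d -> R) : srt s sg ->
  (forall i, 0 <= w i <= 1) ->
  \sum_i s i * w i <= xp s sg k + s (sg k) / g (sg k) * (\sum_i g i * w i - xp g sg k).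
Proof.
move=> hs hw; apply: L1 => // i hi.
  by rewrite -ler_pdivlMr //; apply: hs; apply: ltnW.
by rewrite -ler_pdivrMr //; apply: hs.
Qed.

Lemma knap s sg (w : 'I_d -> R) : srt s sg -> (forall i, 0 <= w i <= 1) ->
  \sum_i s i * w i <= Phi s sg (\sum_i g i * w i).
Proof.
move=> hs hw.
have t0 : 0 <= \sum_i g i * w i.
  by apply: sumr_ge0 => i _; have /andP[? ?] := hw i; apply: mulr_ge0 => //; exact: g_ge0.
have t1 : \sum_i g i * w i <= 1.
  rewrite -gsum; apply: ler_sum => i _; have /andP[? ?] := hw i; have := gpos i; nra.
have [k [h1 h2]] := seg_exists sg _ t0 t1.
rewrite (Phi_seg s sg k _ h1 h2).
apply: (le_trans (L1' s sg k _ hs hw)).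
rewrite le_eqVlt; apply/orP; left; apply/eqP; field; exact: g_ne0.
Qed.

Lemma Phi_sum s sg t : Phi s sg t =
  \sum_i s i * clamp01 ((t - xp g sg ((sg^-1)%g i)) / g i).
Proof.
rewrite -(sum_perm (fun i => s i * clamp01 ((t - xp g sg ((sg^-1)%g i)) / g i)) sg).
by apply: eq_bigr => k _; rewrite permK.
Qed.

Lemma Phi_le_line s sg (k : 'I_d) u : srt s sg -> 0 <= u -> u <= 1 ->
  Phi s sg u <= xp s sg k + s (sg k) / g (sg k) * (u - xp g sg k).
Proof.
move=> hs u0 u1.
have hw : forall i, 0 <= clamp01 ((u - xp g sg ((sg^-1)%g i)) / g i) <= 1.
  by move=> i; rewrite clamp_ge0 clamp_le1.
have := L1' s sg k _ hs hw; rewrite -Phi_sum -Phi_sum Phi_g //.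
Qed.

Lemma Phi_concave s sg a b th : srt s sg -> 0 <= a -> a <= 1 -> 0 <= b -> b <= 1 ->
  0 <= th -> th <= 1 ->
  (1 - th) * Phi s sg a + th * Phi s sg b <= Phi s sg ((1 - th) * a + th * b).
Proof.
move=> hs a0 a1 b0 b1 th0 th1.
set t := (1 - th) * a + th * b.
have t0 : 0 <= t by rewrite /t; nra.
have t1 : t <= 1 by rewrite /t; nra.
have [k [h1 h2]] := seg_exists sg _ t0 t1.
rewrite (Phi_seg s sg k _ h1 h2).
have ha := Phi_le_line s sg k a hs a0 a1.
have hb := Phi_le_line s sg k b hs b0 b1.
have e : xp s sg k + s (sg k) * ((t - xp g sg k) / g (sg k)) =
  (1 - th) * (xp s sg k + s (sg k) / g (sg k) * (a - xp g sg k)) +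
  th * (xp s sg k + s (sg k) / g (sg k) * (b - xp g sg k)).
  rewrite /t; field; exact: g_ne0.
rewrite e; apply: lerD; apply: ler_wpM2l => //; lra.
Qed.

Lemma xp_indic s (pi : {perm 'I_d}) n :
  \sum_i s i * (if ((pi^-1)%g i < n)%N then 1 else 0) = xp s pi n.
Proof.
rewrite -(sum_perm (fun i => s i * (if ((pi^-1)%g i < n)%N then 1 else 0)) pi).
rewrite /xp [RHS]big_mkcond; apply: eq_bigr => m _ /=; rewrite permK.
by case: ifP => _; rewrite ?mulr1 ?mulr0.
Qed.

Lemma strict_curve r p (pr sg : {perm 'I_d}) : (1 < d)%N ->
  srt r pr -> srt p sg -> \sum_i r i = 1 -> \sum_i p i = 1 ->
  (forall k : 'I_d, (k <= d - 2)%N -> xp r pr k.+1 < Phi p sg (xp g pr k.+1)) ->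
  forall t, 0 < t -> t < 1 -> Phi r pr t < Phi p sg t.
Proof.
move=> d2 hr hp rs ps H t t0 t1.
have [k [h1 h2]] := seg_exists pr t (ltW t0) (ltW t1).
have gk := gpos (pr k).
rewrite (Phi_seg r pr k t h1 h2).
have bE := xp_split g pr k.
have YbE := xp_split r pr k.
have a0 := xpg_ge0 pr k.
have a1 := xpg_le1 pr k.
have b1 := xpg_le1 pr k.+1.
set a := xp g pr k in h1 h2 bE a0 a1 *.
set th := (t - a) / g (pr k).
have th0 : 0 <= th by rewrite /th divr_ge0 //; lra.
have th1 : th <= 1 by rewrite /th ler_pdivrMr // mul1r; lra.
have tE : t = (1 - th) * a + th * xp g pr k.+1.
  by rewrite bE /th; field; exact: g_ne0.
have conc := Phi_concave p sg a (xp g pr k.+1) th hp a0 a1 (xpg_ge0 pr k.+1) b1 th0 th1.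
rewrite -tE in conc.
set Ya := xp r pr k in YbE *.
set Yb := xp r pr k.+1 in YbE *.
set Pa := Phi p sg a in conc *.
set Pb := Phi p sg (xp g pr k.+1) in conc *.
have hA : Ya <= Pa /\ ((0 < k)%N -> Ya < Pa).
  case: (posnP k) => [k0|kpos].
    have -> : Ya = 0 by rewrite /Ya k0 xp0.
    have -> : Pa = 0 by rewrite /Pa /a k0 xp0 Phi0.
    by split => //; rewrite k0.
  have hk' : (k.-1 < d)%N by rewrite (leq_ltn_trans (leq_pred k) (ltn_ord k)).
  have := H (Ordinal hk'); rewrite /= prednK //.
  have -> : (k.-1 <= d - 2)%N.
    exact: natB.
  by move=> /(_ isT) h; split => //; apply: ltW.
have hB : Yb <= Pb /\ ((k <= d - 2)%N -> Yb < Pb).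
  case: (leqP k (d - 2)) => hk.
    by have h := H k hk; split => //; apply: ltW.
  have kd : k.+1 = d.
    exact: natA.
  have -> : Yb = 1 by rewrite /Yb kd xpd.
  have -> : Pb = 1 by rewrite /Pb kd xpd gsum Phi1.
  by split => //; rewrite leqNgt hk.
have key : (0 < th /\ Yb < Pb) \/ (th < 1 /\ Ya < Pa).
  case: (leqP k (d - 2)) => hk.
    case: (ltrP 0 th) => hth.
      by left; split => //; apply: hB.2.
    right; split; first lra.
    apply: hA.2; rewrite lt0n; apply/eqP => k0.
    have th00 : th = 0 by lra.
    have : t = a by move: tE; rewrite th00; lra.
    rewrite /a k0 xp0; lra.
  right; split.
    have kd : k.+1 = d by exact: natA.
    have : xp g pr k.+1 = 1 by rewrite kd xpd gsum.
    rewrite /th ltr_pdivrMr // mul1r; lra.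
  apply: hA.2; exact: natC hk.
apply: (lt_le_trans _ conc).
have e : Ya + r (pr k) * th = (1 - th) * Ya + th * Yb by rewrite YbE; ring.
rewrite e.
have e2 : (1 - th) * Pa + th * Pb - ((1 - th) * Ya + th * Yb) =
          th * (Pb - Yb) + (1 - th) * (Pa - Ya) by ring.
rewrite -subr_gt0 e2.
have [hA1 _] := hA; have [hB1 _] := hB.
clearbody Ya Yb Pa Pb th.
case: key => [[p1 p2]|[p1 p2]].
  have q1 : 0 < th * (Pb - Yb) by apply: mulr_gt0; lra.
  have q2 : 0 <= (1 - th) * (Pa - Ya) by apply: mulr_ge0; lra.
  lra.
have q1 : 0 <= th * (Pb - Yb) by apply: mulr_ge0; lra.
have q2 : 0 < (1 - th) * (Pa - Ya) by apply: mulr_gt0; lra.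
lra.
Qed.



Lemma exists_sort (f : 'I_d -> R) :
  exists pi : {perm 'I_d}, forall i j : 'I_d, (i <= j)%N -> f (pi i) <= f (pi j).
Proof.
pose x0 := Ordinal dpos.
pose le := [rel a b : 'I_d | f a <= f b].
pose s := sort le (enum 'I_d).
have ps : perm_eq s (enum 'I_d) by rewrite /s perm_sort perm_refl.
have ss : size s = d by rewrite (perm_size ps) size_enum_ord.
have us : uniq s by rewrite (perm_uniq ps) enum_uniq.
have so : sorted le s.
  by apply: sort_sorted => a b; rewrite /le /=; apply: le_total.
have inj : injective (fun i : 'I_d => nth x0 s i).
  move=> i j /eqP; rewrite nth_uniq ?ss ?ltn_ord // => /eqP; exact: val_inj.
exists (perm inj) => i j hij; rewrite !permE.
have := sorted_leq_nth (leT := le) _ _ x0 so; apply.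
- by move=> a b c; rewrite /le /=; apply: le_trans.
- by move=> a; rewrite /le /=.
- by rewrite inE ss ltn_ord.
- by rewrite inE ss ltn_ord.
- exact: hij.
Qed.

Lemma exists_eps (T : finType) (P : pred T) (F : T -> R) :
  (forall a, P a -> 0 < F a) -> exists e, 0 < e /\ forall a, P a -> e <= F a.
Proof.
move=> hF.
suff : forall s : seq T, exists e, 0 < e /\ forall a, a \in s -> P a -> e <= F a.
  by case/(_ (enum T)) => e [e0 he]; exists e; split => // a; apply: he; rewrite mem_enum.
elim=> [|a s [e [e0 he]]]; first by exists 1.
case: (boolP (P a)) => Pa.
  exists (Num.min e (F a)); split; first by rewrite lt_min e0 hF.
  move=> b; rewrite in_cons => /orP [/eqP ->|hb] Pb; rewrite ge_min.
    by rewrite lexx orbT.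
  by rewrite he.
exists e; split => // b; rewrite in_cons => /orP [/eqP ->|hb] Pb.
  by rewrite Pb in Pa.
exact: he.
Qed.

Definition gv : 'cV[R]_d := \col_i g i.
Definition isTPg (T : 'M[R]_d) : Prop :=
  (forall i j, 0 <= T i j) /\ (forall j, \sum_(i < d) T i j = 1) /\ T *m gv = gv.

Definition Fj (sg : {perm 'I_d}) (j : 'I_d) (t : R) :=
  clamp01 ((t - xp g sg ((sg^-1)%g j)) / g j).
Definition Tm (sg pi : {perm 'I_d}) : 'M[R]_d :=
  \matrix_(i, j) (Fj sg j (xp g pi ((pi^-1)%g i).+1) - Fj sg j (xp g pi ((pi^-1)%g i))).

Lemma Fj_mono sg j a b : a <= b -> Fj sg j a <= Fj sg j b.
Proof.
move=> ab; apply: clamp_mono; apply: ler_wpM2r; first by rewrite invr_ge0 g_ge0.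
lra.
Qed.

Lemma Fj0 sg j : Fj sg j 0 = 0.
Proof.
rewrite /Fj clamp_le0 // ler_pdivrMr // mul0r.
have := xpg_ge0 sg ((sg^-1)%g j); lra.
Qed.

Lemma Fj1 sg j : Fj sg j 1 = 1.
Proof.
rewrite /Fj clamp_ge1 // ler_pdivlMr // mul1r.
have := xpg_le1 sg ((sg^-1)%g j).+1; rewrite xp_split permKV; lra.
Qed.

Lemma tele (a : nat -> R) n : (n <= d)%N ->
  \sum_(m < d | (m < n)%N) (a m.+1 - a m) = a n - a 0.
Proof.
move=> hn; rewrite -(big_ord_widen _ (fun m => a m.+1 - a m) hn).
by rewrite -(big_mkord xpredT (fun m => a m.+1 - a m)) telescope_sumr.
Qed.

Lemma Tm_mul sg pi (v : 'cV[R]_d) i :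
  (Tm sg pi *m v) i 0 = Phi (fun j => v j 0) sg (xp g pi ((pi^-1)%g i).+1) -
                        Phi (fun j => v j 0) sg (xp g pi ((pi^-1)%g i)).
Proof.
rewrite mxE !Phi_sum -sumrB; apply: eq_bigr => j _; rewrite mxE /Fj; ring.
Qed.

Lemma Tm_TP sg pi : isTPg (Tm sg pi).
Proof.
split; [|split].
- move=> i j; rewrite mxE subr_ge0; apply: Fj_mono.
  by rewrite xp_split lerDl g_ge0.
- move=> j.
  rewrite -(sum_perm (fun i => Tm sg pi i j) pi).
  have -> : \sum_i Tm sg pi (pi i) j =
      \sum_(m < d | (m < d)%N) ((fun n => Fj sg j (xp g pi n)) m.+1 - (fun n => Fj sg j (xp g pi n)) m).
    by apply: eq_big => [m|m _]; rewrite ?ltn_ord // mxE permK.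
  by rewrite (tele (fun n => Fj sg j (xp g pi n))) // xpd gsum xp0 Fj1 Fj0 subr0.
- apply/matrixP => i k; rewrite ord1 {k}.
  have -> : gv i 0 = g i by rewrite mxE.
  rewrite Tm_mul.
  have hP : forall n, Phi (fun j => gv j 0) sg (xp g pi n) = xp g pi n.
    move=> n; rewrite -[RHS](Phi_g sg (xp g pi n)) ?xpg_ge0 ?xpg_le1 //.
    by apply: eq_bigr => k _; rewrite mxE.
  rewrite !hP xp_split permKV; ring.
Qed.

Lemma Tm_prefix sg pi (v : 'cV[R]_d) (k : nat) : (k <= d)%N ->
  \sum_(m < d | (m < k)%N) (Tm sg pi *m v) (pi m) 0 =
  Phi (fun j => v j 0) sg (xp g pi k).
Proof.
move=> hk.
have -> : \sum_(m < d | (m < k)%N) (Tm sg pi *m v) (pi m) 0 =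
   \sum_(m < d | (m < k)%N) ((fun n => Phi (fun j => v j 0) sg (xp g pi n)) m.+1 -
                       (fun n => Phi (fun j => v j 0) sg (xp g pi n)) m).
  by apply: eq_bigr => m _; rewrite Tm_mul permK.
by rewrite (tele (fun n => Phi (fun j => v j 0) sg (xp g pi n))) // xp0 Phi0 subr0.
Qed.

Lemma TP_state T (v : 'cV[R]_d) : isTPg T -> (forall i, 0 <= v i 0) ->
  \sum_i v i 0 = 1 ->
  (forall i, 0 <= (T *m v) i 0) /\ \sum_i (T *m v) i 0 = 1.
Proof.
move=> [T0 [T1 _]] v0 v1; split.
  by move=> i; rewrite mxE; apply: sumr_ge0 => j _; apply: mulr_ge0.
rewrite -v1.
have -> : \sum_i (T *m v) i 0 = \sum_i \sum_j T i j * v j 0.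
  by apply: eq_bigr => i _; rewrite mxE.
rewrite exchange_big /=; apply: eq_bigr => j _.
by rewrite -mulr_suml T1 mul1r.
Qed.

Lemma abel_nat (cc uu : nat -> R) n :
  (forall k, (k.+1 < n)%N -> cc k <= cc k.+1) ->
  (forall k, (0 < k)%N -> (k < n)%N -> \sum_(m < k) uu m <= 0) ->
  cc n.-1 * \sum_(m < n) uu m <= \sum_(m < n) cc m * uu m.
Proof.
elim: n => [|n IH] hc hu; first by rewrite !big_ord0 mulr0.
rewrite !big_ord_recr /=.
have IH' := IH (fun k hk => hc k (ltnW hk)) (fun k h0 hk => hu k h0 (ltnW hk)).
case: (posnP n) => [n0|npos].
  by rewrite n0 !big_ord0 add0r; lra.
have U0 := hu n npos (ltnSn n).
have c1 : cc n.-1 <= cc n by have := hc n.-1; rewrite prednK // => /(_ (ltnSn n)).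
move: IH' U0 c1.
set U := \sum_(i < n) uu i.
set A := \sum_(i < n) cc i * uu i.
move=> IH' U0 c1.
have : cc n * U <= cc n.-1 * U.
  have := ler_wnM2r (x := U) U0 c1; done.
clearbody U A; nra.
Qed.

Lemma abel_ord (c u : 'I_d -> R) (pi : {perm 'I_d}) :
  (forall i j : 'I_d, (i <= j)%N -> c (pi i) <= c (pi j)) ->
  (forall k : nat, (0 < k)%N -> (k < d)%N -> \sum_(m < d | (m < k)%N) u (pi m) <= 0) ->
  \sum_i u i = 0 -> 0 <= \sum_i c i * u i.
Proof.
move=> hc hu hs.
pose x0 := Ordinal dpos.
pose cc := fun n : nat => c (pi (insubd x0 n)).
pose uu := fun n : nat => u (pi (insubd x0 n)).
have E1 : \sum_i c i * u i = \sum_(m < d) cc m * uu m.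
  rewrite -(sum_perm (fun i => c i * u i) pi); apply: eq_bigr => i _.
  by rewrite /cc /uu valKd.
have E2 : forall k, (k <= d)%N -> \sum_(m < k) uu m = \sum_(m < d | (m < k)%N) u (pi m).
  move=> k hk; rewrite (big_ord_widen _ uu hk); apply: eq_bigr => i _.
  by rewrite /uu valKd.
have hm : forall k, (k.+1 < d)%N -> cc k <= cc k.+1.
  move=> k hk; apply: hc; rewrite !val_insubd hk (ltnW hk); exact: leqnSn.
have hp : forall k, (0 < k)%N -> (k < d)%N -> \sum_(m < k) uu m <= 0.
  by move=> k k0 kd; rewrite E2 ?(ltnW kd) //; apply: hu.
have H := abel_nat cc uu d hm hp.
rewrite E1; apply: le_trans H.
rewrite E2 //.
have -> : \sum_(m < d | (m < d)%N) u (pi m) = \sum_m u (pi m).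
  by apply: eq_bigl => m; rewrite ltn_ord.
by rewrite sum_perm hs mulr0.
Qed.

End Thermo.

End Thermo.
Import Thermo.

Section Main.
Variables (R : realType) (d : nat) (g : 'I_d -> R).
Hypothesis d2 : (1 < d)%N.
Hypothesis gpos : forall i, 0 < g i.
Hypothesis gsum : \sum_i g i = 1.
Let dpos : (0 < d)%N := ltnW d2.
Local Notation xp := (@Thermo.xp R d).
Local Notation Phi := (@Thermo.Phi R d g).
Local Notation srt := (@Thermo.srt R d g).
Local Notation isTPg := (@Thermo.isTPg R d g).
Local Notation gv := (@Thermo.gv R d g).
Local Notation Tm := (@Thermo.Tm R d g).
Let knap := @Thermo.knap R d g dpos gpos gsum.
Let strict_curve := @Thermo.strict_curve R d g dpos gpos gsum.
Let exists_sort := @Thermo.exists_sort R d dpos.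
Let Tm_TP := @Thermo.Tm_TP R d g dpos gpos gsum.
Let Tm_prefix := @Thermo.Tm_prefix R d g gpos.
Let TP_state := @Thermo.TP_state R d g.
Let abel_ord := @Thermo.abel_ord R d dpos.
Let xpg_ge0 := @Thermo.xpg_ge0 R d g gpos.
Let xpg_le1 := @Thermo.xpg_le1 R d g gpos gsum.
Let Phi1 := @Thermo.Phi1 R d g gpos gsum.
Let xp_split := @Thermo.xp_split R d.
Let xpd := @Thermo.xpd R d.
Let xp0 := @Thermo.xp0 R d.
Let xp_mono := @Thermo.xp_mono R d.
Let sum_perm := @Thermo.sum_perm R d.
Let xp_indic := @Thermo.xp_indic R d.

Lemma partial_le_full (P : pred 'I_d) (F : 'I_d -> R) :
  (forall i, 0 <= F i) -> \sum_(i | P i) F i <= \sum_i F i.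
Proof.
move=> F0; rewrite big_mkcond; apply: ler_sum => i _.
by case: ifP => _; rewrite ?lexx ?F0.
Qed.

Lemma prefix_eq T (v : 'cV[R]_d) (pi : {perm 'I_d}) (P : pred 'I_d) :
  \sum_(i | P i) (T *m v) (pi i) 0 = \sum_j v j 0 * \sum_(i | P i) T (pi i) j.
Proof.
have -> : \sum_(i | P i) (T *m v) (pi i) 0 = \sum_(i | P i) \sum_j T (pi i) j * v j 0.
  by apply: eq_bigr => i _; rewrite mxE.
rewrite exchange_big /=; apply: eq_bigr => j _.
by rewrite mulr_sumr; apply: eq_bigr => i _; rewrite mulrC.
Qed.

Lemma prefix_bound T (v : 'cV[R]_d) (pi sg : {perm 'I_d}) (P : pred 'I_d) :
  isTPg T -> srt (fun i => v i 0) sg ->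
  \sum_(i | P i) (T *m v) (pi i) 0 <= Phi (fun i => v i 0) sg (\sum_(i | P i) g (pi i)).
Proof.
move=> [T0 [T1 Tg]] hs.
pose w j := \sum_(i | P i) T (pi i) j.
have hw : forall j, 0 <= w j <= 1.
  move=> j; apply/andP; split; first by apply: sumr_ge0.
  rewrite -(T1 j) -(sum_perm (fun i => T i j) pi).
  exact: partial_le_full.
have e2 : \sum_(i | P i) g (pi i) = \sum_j g j * w j.
  have -> : \sum_(i | P i) g (pi i) = \sum_(i | P i) (T *m gv) (pi i) 0.
    by apply: eq_bigr => i _; rewrite Tg mxE.
  by rewrite prefix_eq; apply: eq_bigr => j _; rewrite mxE.
rewrite prefix_eq e2; exact: knap.
Qed.

Lemma sum_ind (a : 'I_d) : \sum_i (i == a)%:R = 1 :> R.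
Proof. by rewrite (bigD1 a) //= eqxx big1 ?addr0 // => i /negbTE ->. Qed.

Lemma ycum_xp (s : 'I_d -> R) (pi : {perm 'I_d}) (k : 'I_d) :
  \sum_(i < d | (i <= k)%N) s (pi i) = xp s pi k.+1.
Proof. by apply: eq_bigl => i; rewrite ltnS. Qed.

Lemma dir1 (p r : 'cV[R]_d) :
  ((forall i, 0 <= p i 0) /\ \sum_i p i 0 = 1) ->
  (\sum_(i < d) r i 0 = 1 /\ exists2 eps : R, 0 < eps & forall x : 'cV[R]_d,
      \sum_(i < d) x i 0 = 1 -> (forall i, `|x i 0 - r i 0| < eps) ->
      exists T, isTPg T /\ x = T *m p) ->
  ((forall i, 0 <= r i 0) /\ \sum_(i < d) r i 0 = 1) /\
  forall pi sigma : {perm 'I_d}, srt (fun i => r i 0) pi -> srt (fun i => p i 0) sigma ->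
    forall k : 'I_d, (k <= d - 2)%N ->
    \sum_(i < d | (i <= k)%N) r (pi i) 0 <
      Phi (fun i => p i 0) sigma (\sum_(i < d | (i <= k)%N) g (pi i)).
Proof.
move=> [p0 ps] [rs [eps e0 He]].
have [T [TT rE]] : exists T, isTPg T /\ r = T *m p.
  by apply: He => // i; rewrite subrr normr0.
have rst : (forall i, 0 <= r i 0) /\ \sum_i r i 0 = 1.
  by rewrite rE; apply: TP_state.
split => // pi sg hr hs k hk.
pose o0 := Ordinal dpos.
have hd1 : (d.-1 < d)%N by rewrite prednK.
pose od := Ordinal hd1.
pose a := pi o0. pose b := pi od.
pose de := eps / 2.
have de0 : 0 < de by rewrite /de divr_gt0.
pose x : 'cV[R]_d := \col_i (r i 0 + de * ((i == a)%:R - (i == b)%:R)).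
have xs : \sum_i x i 0 = 1.
  have -> : \sum_i x i 0 = \sum_i r i 0 + de * (\sum_i (i == a)%:R - \sum_i (i == b)%:R).
    rewrite -sumrB mulr_sumr -big_split /=; apply: eq_bigr => i _.
    by rewrite mxE mulrBr.
  by rewrite !sum_ind subrr mulr0 addr0.
have xc : forall i, `|x i 0 - r i 0| < eps.
  move=> i; rewrite mxE addrC addKr normrM (gtr0_norm de0).
  have h : `|(i == a)%:R - (i == b)%:R : R| <= 1.
    by case: (i == a); case: (i == b); rewrite /= ?subrr ?normr0 ?subr0 ?normr1 ?sub0r ?normrN ?normr1.
  have : de * `|(i == a)%:R - (i == b)%:R : R| <= de * 1 by apply: ler_wpM2l => //; lra.
  rewrite /de; lra.
have [T' [TT' xE]] := He x xs xc.
have pb := prefix_bound T' p pi sg (fun i : 'I_d => (i <= k)%N) TT' hs.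
rewrite -xE in pb.
have ex : \sum_(i < d | (i <= k)%N) x (pi i) 0 =
          \sum_(i < d | (i <= k)%N) r (pi i) 0 + de.
  have -> : \sum_(i < d | (i <= k)%N) x (pi i) 0 =
      \sum_(i < d | (i <= k)%N) r (pi i) 0 +
      de * (\sum_(i < d | (i <= k)%N) (i == o0)%:R - \sum_(i < d | (i <= k)%N) (i == od)%:R).
    rewrite -sumrB mulr_sumr -big_split /=; apply: eq_bigr => i _.
    by rewrite mxE /a /b !(inj_eq (@perm_inj _ pi)) mulrBr.
  have s1 : \sum_(i < d | (i <= k)%N) (i == o0)%:R = 1 :> R.
    rewrite (bigD1 o0) //= ?eqxx big1 ?addr0 // => i /andP [_ /negbTE ->] //.
  have s2 : \sum_(i < d | (i <= k)%N) (i == od)%:R = 0 :> R.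
    apply: big1 => i hi; rewrite -val_eqE /=.
    have : (i < d.-1)%N.
      apply: (leq_ltn_trans hi); apply: (leq_ltn_trans hk).
      by move: d2; clear; lia.
    by move=> /ltn_eqF ->.
  by rewrite s1 s2 subr0 mulr1.
rewrite ex in pb; lra.
Qed.

Lemma sum_const_d (c : R) : \sum_(i < d) c = c * d%:R.
Proof.
by rewrite -(big_mkord xpredT (fun _ => c)) sumr_const_nat subn0 mulr_natr.
Qed.

Lemma dir2 (p r : 'cV[R]_d) :
  ((forall i, 0 <= p i 0) /\ \sum_i p i 0 = 1) ->
  ((forall i, 0 <= r i 0) /\ \sum_(i < d) r i 0 = 1) /\
  (forall pi sigma : {perm 'I_d}, srt (fun i => r i 0) pi -> srt (fun i => p i 0) sigma ->
    forall k : 'I_d, (k <= d - 2)%N ->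
    \sum_(i < d | (i <= k)%N) r (pi i) 0 <
      Phi (fun i => p i 0) sigma (\sum_(i < d | (i <= k)%N) g (pi i))) ->
  (\sum_(i < d) r i 0 = 1 /\ exists2 eps : R, 0 < eps & forall x : 'cV[R]_d,
      \sum_(i < d) x i 0 = 1 -> (forall i, `|x i 0 - r i 0| < eps) ->
      exists T, isTPg T /\ x = T *m p).
Proof.
move=> [p0 ps] [[r0 rs] H].
have [pr hpr] := exists_sort (fun i => - (r i 0 / g i)).
have sr : srt (fun i => r i 0) pr.
  by move=> i j hij; have := hpr i j hij; rewrite lerN2.
have [sg hsg] := exists_sort (fun i => - (p i 0 / g i)).
have sp : srt (fun i => p i 0) sg.
  by move=> i j hij; have := hsg i j hij; rewrite lerN2.
have Hs : forall k : 'I_d, (k <= d - 2)%N ->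
    xp (fun i => r i 0) pr k.+1 < Phi (fun i => p i 0) sg (xp g pr k.+1).
  by move=> k hk; rewrite -!ycum_xp; apply: H.
have strict := strict_curve _ _ _ _ d2 sr sp rs ps Hs.
pose o0 := Ordinal dpos.
have hd1 : (d.-1 < d)%N by rewrite prednK.
pose od := Ordinal hd1.
have Hall : forall (pi : {perm 'I_d}) (k : 'I_d), (k <= d - 2)%N ->
    xp (fun i => r i 0) pi k.+1 < Phi (fun i => p i 0) sg (xp g pi k.+1).
  move=> pi k hk.
  pose w := fun i : 'I_d => if (((pi^-1)%g i) < k.+1)%N then 1 else 0 : R.
  have hw : forall i, 0 <= w i <= 1.
    by move=> i; rewrite /w; case: ifP; rewrite ?lexx ?ler01.
  have := knap _ _ _ sr hw; rewrite !xp_indic => h1.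
  apply: (le_lt_trans h1); apply: strict.
    have := xp_mono g pi 1 k.+1 (fun i => ltW (gpos i)) isT.
    have := xp_split g pi o0; rewrite /= xp0 add0r => ->.
    have := gpos (pi o0); lra.
  have h2 := xp_mono g pi k.+1 d.-1 (fun i => ltW (gpos i)).
  have h3 : (k.+1 <= d.-1)%N by move: hk d2; clear; lia.
  have := h2 h3.
  have := xp_split g pi od; rewrite /= prednK // xpd gsum.
  have := gpos (pi od); lra.
have hpos : forall pk : {perm 'I_d} * 'I_d, (pk.2 <= d - 2)%N ->
   0 < Phi (fun i => p i 0) sg (xp g pk.1 pk.2.+1) - xp (fun i => r i 0) pk.1 pk.2.+1.
  by move=> pk hpk; rewrite subr_gt0; exact: Hall.
have [e [e0 He]] := @exists_eps R _ _ _ hpos.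
have dR : 0 < d%:R :> R by rewrite ltr0n.
split => //; exists (e / d%:R); first by rewrite divr_gt0.
move=> x xs xc.
have Hx : forall (pi : {perm 'I_d}) (k : 'I_d), (k <= d - 2)%N ->
    xp (fun i => x i 0) pi k.+1 <= Phi (fun i => p i 0) sg (xp g pi k.+1).
  move=> pi k hk.
  have := He (pi, k) hk => /= h.
  have : xp (fun i => x i 0) pi k.+1 - xp (fun i => r i 0) pi k.+1 <= e.
    rewrite /Thermo.xp -sumrB.
    apply: (@le_trans _ _ (\sum_(i < d | (i < k.+1)%N) (e / d%:R))).
      apply: ler_sum => i _; have := xc (pi i); rewrite ltr_norml; lra.
    apply: (@le_trans _ _ (\sum_(i < d) (e / d%:R))).
      by apply: partial_le_full => i; apply: ltW; apply: divr_gt0.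
    rewrite sum_const_d divfK ?lexx //; exact: lt0r_neq0.
  lra.
pose N := #|{perm 'I_d}|.
pose a := fun (j : 'I_N) (k : 'I_d.+1) =>
  if unlift ord0 k is Some i then (Tm sg (enum_val j) *m p) i 0 else 1.
pose b := fun k : 'I_d.+1 => if unlift ord0 k is Some i then x i 0 else 1.
case: (@farkas R _ _ a b) => [[mu [mu0 hb]]|[c [hc hcb]]].
  have m1 : \sum_j mu j = 1.
    have := hb ord0; rewrite /b unlift_none => ->.
    by apply: eq_bigr => j _; rewrite /a unlift_none mulr1.
  have mx : forall i, x i 0 = \sum_j mu j * (Tm sg (enum_val j) *m p) i 0.
    move=> i; have := hb (lift ord0 i); rewrite /b liftK => ->.
    by apply: eq_bigr => j _; rewrite /a liftK.
  exists (\sum_j mu j *: Tm sg (enum_val j)); split; [split; [|split]|].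
  - move=> i k; rewrite summxE; apply: sumr_ge0 => j _; rewrite mxE.
    by apply: mulr_ge0 => //; have [h _] := Tm_TP sg (enum_val j); apply: h.
  - move=> k.
    have -> : \sum_i (\sum_j mu j *: Tm sg (enum_val j)) i k =
              \sum_i \sum_j mu j * Tm sg (enum_val j) i k.
      by apply: eq_bigr => i _; rewrite summxE; apply: eq_bigr => j _; rewrite mxE.
    rewrite exchange_big /= -m1; apply: eq_bigr => j _.
    have [_ [h _]] := Tm_TP sg (enum_val j).
    by rewrite -mulr_sumr h mulr1.
  - rewrite mulmx_suml.
    have -> : \sum_j mu j *: Tm sg (enum_val j) *m gv = \sum_j mu j *: gv.
      apply: eq_bigr => j _; rewrite -scalemxAl.
      by have [_ [_ ->]] := Tm_TP sg (enum_val j).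
    by rewrite -scaler_suml m1 scale1r.
  - apply/matrixP => i k; rewrite ord1 {k} mulmx_suml summxE mx.
    by apply: eq_bigr => j _; rewrite -scalemxAl [RHS]mxE.
exfalso.
pose c' := fun i : 'I_d => c (lift ord0 i).
have [pi hpi] := exists_sort c'.
have hj := hc (enum_rank pi).
rewrite Farkas.dotvE big_ord_recl /a unlift_none mulr1 in hj.
have {}hj : 0 <= c ord0 + \sum_i c' i * (Tm sg pi *m p) i 0.
  move: hj; congr (_ <= _ + _); apply: eq_bigr => i _.
  by rewrite liftK enum_rankK.
rewrite Farkas.dotvE big_ord_recl /b unlift_none mulr1 in hcb.
have {}hcb : c ord0 + \sum_i c' i * x i 0 < 0.
  move: hcb; congr (_ + _ < _); apply: eq_bigr => i _.
  by rewrite liftK.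
pose q := Tm sg pi *m p.
have qs : \sum_i q i 0 = 1.
  by have [_ ->] := TP_state _ _ (Tm_TP sg pi) p0 ps.
have ab := abel_ord c' (fun i => x i 0 - q i 0) pi hpi.
have hpre : forall k : nat, (0 < k)%N -> (k < d)%N ->
    \sum_(m < d | (m < k)%N) (x (pi m) 0 - q (pi m) 0) <= 0.
  move=> k k0 kd.
  rewrite sumrB Tm_prefix ?(ltnW kd) //.
  have hk1 : (k.-1 < d)%N by rewrite (leq_ltn_trans (leq_pred k) kd).
  have := Hx pi (Ordinal hk1); rewrite /= prednK //.
  have -> : (k.-1 <= d - 2)%N by move: kd k0; clear; lia.
  by move=> /(_ isT); rewrite /Thermo.xp; lra.
have hsum : \sum_i (x i 0 - q i 0) = 0 by rewrite sumrB xs qs subrr.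
have := ab hpre hsum.
have -> : \sum_i c' i * (x i 0 - q i 0) =
          \sum_i c' i * x i 0 - \sum_i c' i * q i 0.
  by rewrite -sumrB; apply: eq_bigr => i _; rewrite mulrBr.
rewrite /q in hj *; lra.
Qed.


End Main.

Section Final.
Variables (R : realType) (d : nat) (g : 'I_d -> R).
Hypothesis d2 : (1 < d)%N.
Hypothesis gpos : forall i, 0 < g i.
Hypothesis gsum : \sum_i g i = 1.

Lemma main_gen (p : 'cV[R]_d) (hp : (forall i, 0 <= p i 0) /\ \sum_i p i 0 = 1)
  (r : 'cV[R]_d) :
  (\sum_(i < d) r i 0 = 1 /\ exists2 eps : R, 0 < eps & forall x : 'cV[R]_d,
      \sum_(i < d) x i 0 = 1 -> (forall i, `|x i 0 - r i 0| < eps) ->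
      exists T, Thermo.isTPg R d g T /\ x = T *m p) <->
  (((forall i, 0 <= r i 0) /\ \sum_(i < d) r i 0 = 1) /\
  forall pi sigma : {perm 'I_d}, Thermo.srt R d g (fun i => r i 0) pi ->
    Thermo.srt R d g (fun i => p i 0) sigma ->
    forall k : 'I_d, (k <= d - 2)%N ->
    \sum_(i < d | (i <= k)%N) r (pi i) 0 <
      Thermo.Phi R d g (fun i => p i 0) sigma (\sum_(i < d | (i <= k)%N) g (pi i))).
Proof.
split; [exact: (@dir1 R d g d2 gpos gsum p r hp) | exact: (@dir2 R d g d2 gpos gsum p r hp)].
Qed.
End Final.

Theorem mainTheorem5 (R : realType) (d : nat) (hd : (2 <= d)%N)
  (beta : R) (hbeta : 0 < beta) (E : 'I_d -> R) (i0 : 'I_d)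
  (hi0 : nat_of_ord i0 = 0%N) (hE0 : E i0 = 0) (hEinj : injective E)
  (p : 'cV[R]_d) (hp : isState p) (r : 'cV[R]_d) :
  rel_interior (TPorbit beta E i0 p) r <->
  (isState r /\
   forall (pi sigma : {perm 'I_d}),
     sorting beta E i0 r pi -> sorting beta E i0 p sigma ->
     forall k : 'I_d, (k <= d - 2)%N ->
       ycum r pi k < tmcurve beta E i0 p sigma (xcum beta E i0 pi k)).
Proof.
pose g := gibbs beta E i0.
have Zpos : 0 < \sum_(j < d) qfac beta E j i0.
  rewrite (bigD1 i0) //=.
  have h1 : 0 < qfac beta E i0 i0 by rewrite /qfac expR_gt0.
  have h2 : 0 <= \sum_(j < d | j != i0) qfac beta E j i0.
    by apply: sumr_ge0 => j _; rewrite /qfac ltW // expR_gt0.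
  lra.
have gpos : forall i, 0 < g i.
  by move=> i; rewrite /g /gibbs divr_gt0 // /qfac expR_gt0.
have gsum : \sum_i g i = 1.
  by rewrite /g /gibbs -mulr_suml divff // gt_eqF.
exact: (@main_gen R d g hd gpos gsum p hp r).
Qed.
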